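(* Let $R$ be a principal ideal domain and let $\mathcal A$ be the category of finitely generated $R$-modules. Then the thick subcategories, the wide subcategories and the Serre subcategories of $\mathcal A$ coincide: they are exactly $\mathcal A$ itself and, for each subset $S$ of the maximal primes of $R$, the full subcategory of finitely generated $S$-torsion modules. These subcategories are in bijection with the specialisation closed subsets of $\mathrm{Spec}(R)$.
   Context: A full additive subcategory $\mathcal C$ of $\mathcal A$ is triangulated if whenever two of the three terms of a short exact sequence in $\mathcal A$ belong to $\mathcal C$, so does the third; it is thick if it is triangulated and closed under direct summands. A wide subcategory is a full subcategory that is abelian (closed under kernels and cokernels) and closed under extensions; a Serre subcategory is a wide subcategory closed under submodules and quotient modules. A finitely generated module is $S$-torsion if it is torsion and its $p$-primary component (elements annihilated by a power of $p$) is zero for every prime $p\notin S$. A subset of $\mathrm{Spec}(R)$ is specialisation closed if it is a union of Zariski-closed subsets. *)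

(* Defs.v *)
From HB Require Import structures.
From mathcomp Require Import all_boot all_order all_algebra.
Set Implicit Arguments. Unset Strict Implicit. Unset Printing Implicit Defensive.
Import GRing.Theory.
Local Open Scope ring_scope.

Section Defs.
Variable R : idomainType.

Definition dvd (a b : R) : Prop := exists c, b = c * a.

Definition is_ideal (I : R -> Prop) : Prop :=
  I 0 /\ (forall x y, I x -> I y -> I (x + y)) /\ (forall r x, I x -> I (r * x)).

Definition is_PID : Prop :=
  forall I, is_ideal I -> exists a, forall x, I x <-> dvd a x.

Definition is_prime_ideal (P : R -> Prop) : Prop :=
  is_ideal P /\ ~ P 1 /\ (forall a b, P (a * b) -> P a \/ P b).

Definition is_maximal_ideal (P : R -> Prop) : Prop :=
  is_ideal P /\ ~ P 1 /\
  (forall J, is_ideal J -> (forall x, P x -> J x) -> (forall x, J x -> P x) \/ J 1).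

Definition is_prime_elt (p : R) : Prop :=
  p != 0 /\ ~ (p \is a GRing.unit) /\ (forall a b, dvd p (a * b) -> dvd p a \/ dvd p b).

(* subsets of Spec R are predicates on (prime) ideals, compared extensionally *)
Definition Vset (I : R -> Prop) (P : R -> Prop) : Prop :=
  is_prime_ideal P /\ forall x, I x -> P x.

(* T is a union of Zariski-closed subsets V(I) of Spec R *)
Definition spec_closed (T : (R -> Prop) -> Prop) : Prop :=
  (forall P, T P -> is_prime_ideal P) /\
  (forall P, T P -> exists I, is_ideal I /\ Vset I P /\ (forall Q, Vset I Q -> T Q)).

Definition same_specset (T1 T2 : (R -> Prop) -> Prop) : Prop :=
  forall P, is_prime_ideal P -> (T1 P <-> T2 P).

Definition lin (M N : lmodType R) (f : M -> N) : Prop :=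
  forall (a : R) (x y : M), f (a *: x + y) = a *: f x + f y.

Definition fin_gen (M : lmodType R) : Prop :=
  exists n (v : 'I_n -> M), forall m : M, exists a : 'I_n -> R, m = \sum_(i < n) a i *: v i.

Definition iso (M N : lmodType R) : Prop :=
  exists f : M -> N, lin f /\ bijective f.

(* a subcategory (of all modules) given by its class of objects *)
Definition subcat := lmodType R -> Prop.

Definition same_subcat (C D : subcat) : Prop := forall M, C M <-> D M.

Definition fgA : subcat := fun M => fin_gen M.

Definition full_additive (C : subcat) : Prop :=
  (forall M, C M -> fin_gen M) /\
  (forall M N : lmodType R, iso M N -> C M -> C N) /\
  (forall M : lmodType R, (forall x : M, x = 0) -> C M) /\
  (forall M N : lmodType R, C M -> C N -> C (M * N)%type).

Definition ses (M1 M2 M3 : lmodType R) (f : M1 -> M2) (g : M2 -> M3) : Prop :=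
  fin_gen M1 /\ fin_gen M2 /\ fin_gen M3 /\
  lin f /\ lin g /\ injective f /\ (forall z, exists y, g y = z) /\
  (forall y, g y = 0 <-> exists x, y = f x).

Definition two_of_three (C : subcat) : Prop :=
  forall (M1 M2 M3 : lmodType R) (f : M1 -> M2) (g : M2 -> M3), ses f g ->
    ((C M1 -> C M2 -> C M3) /\ (C M1 -> C M3 -> C M2) /\ (C M2 -> C M3 -> C M1)).

Definition triangulated (C : subcat) : Prop := full_additive C /\ two_of_three C.

Definition thick (C : subcat) : Prop :=
  triangulated C /\ (forall M N : lmodType R, C (M * N)%type -> C M).

Definition is_kernel (M N K : lmodType R) (f : M -> N) (k : K -> M) : Prop :=
  lin k /\ injective k /\ (forall x, f x = 0 <-> exists z, x = k z).
Definition is_cokernel (M N Q : lmodType R) (f : M -> N) (q : N -> Q) : Prop :=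
  lin q /\ (forall z, exists y, q y = z) /\ (forall y, q y = 0 <-> exists x, y = f x).

Definition wide (C : subcat) : Prop :=
  full_additive C /\
  (forall (M N K : lmodType R) (f : M -> N) (k : K -> M),
      C M -> C N -> lin f -> is_kernel f k -> C K) /\
  (forall (M N Q : lmodType R) (f : M -> N) (q : N -> Q),
      C M -> C N -> lin f -> is_cokernel f q -> C Q) /\
  (forall (M1 M2 M3 : lmodType R) (f : M1 -> M2) (g : M2 -> M3),
      ses f g -> C M1 -> C M3 -> C M2).

Definition serre (C : subcat) : Prop :=
  wide C /\
  (forall (N M : lmodType R) (i : N -> M), lin i -> injective i -> C M -> C N) /\
  (forall (M N : lmodType R) (q : M -> N), lin q -> (forall z, exists y, q y = z) -> C M -> C N).

Definition torsion (M : lmodType R) : Prop :=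
  forall m : M, exists r : R, r != 0 /\ r *: m = 0.

Definition in_S (S : (R -> Prop) -> Prop) (p : R) : Prop :=
  exists P, S P /\ forall x, P x <-> dvd p x.

Definition S_torsion (S : (R -> Prop) -> Prop) : subcat := fun M =>
  fin_gen M /\ torsion M /\
  forall p, is_prime_elt p -> ~ in_S S p ->
    forall m : M, (exists n : nat, p ^+ n *: m = 0) -> m = 0.

End Defs.

(* Main.v *)
From HB Require Import structures.
From mathcomp Require Import all_boot all_order all_algebra.
From mathcomp Require Import boolp.
From mathcomp Require Import ring.
Require Import Defs.
Set Implicit Arguments. Unset Strict Implicit. Unset Printing Implicit Defensive.
Import GRing.Theory.
Local Open Scope ring_scope.

Section Ring.
Variable R : idomainType.
Implicit Types a b c d e p r s u v x y : R.

Lemma dvd_refl a : dvd a a. Proof. by exists 1; rewrite mul1r. Qed.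
Lemma dvd0 a : dvd a 0. Proof. by exists 0; rewrite mul0r. Qed.
Lemma dvd_trans a b c : dvd a b -> dvd b c -> dvd a c.
Proof. by move=> [k ->] [l ->]; exists (l * k); rewrite mulrA. Qed.
Lemma dvd_mull a b c : dvd a b -> dvd a (c * b).
Proof. by move=> [k ->]; exists (c * k); rewrite mulrA. Qed.
Lemma dvd_mulr a b c : dvd a b -> dvd a (b * c).
Proof. by move=> h; rewrite mulrC; apply: dvd_mull. Qed.
Lemma dvd_mul_l a b : dvd a (b * a). Proof. by exists b. Qed.
Lemma dvd_mul_r a b : dvd a (a * b). Proof. by exists b; rewrite mulrC. Qed.
Lemma dvdD a b c : dvd a b -> dvd a c -> dvd a (b + c).
Proof. by move=> [k ->] [l ->]; exists (k + l); rewrite mulrDl. Qed.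
Lemma dvdN a b : dvd a b -> dvd a (- b).
Proof. by move=> [k ->]; exists (- k); rewrite mulNr. Qed.
Lemma dvdB a b c : dvd a b -> dvd a c -> dvd a (b - c).
Proof. by move=> h1 h2; apply: dvdD => //; apply: dvdN. Qed.
Lemma dvd1U a : dvd a 1 <-> a \is a GRing.unit.
Proof.
split=> [[k e]|h]; first by apply/unitrP; exists k; split=> //; rewrite mulrC.
by exists a^-1; rewrite mulVr.
Qed.
Lemma dvdU a b : a \is a GRing.unit -> dvd a b.
Proof. by move=> /dvd1U h; apply: (dvd_trans h); exists b; rewrite mulr1. Qed.
Lemma dvd_cancel a b c : c != 0 -> dvd (a * c) (b * c) -> dvd a b.
Proof. by move=> c0 [k]; rewrite mulrA => /(mulIf c0) ->; apply: dvd_mul_l. Qed.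
Lemma dvd_cancel_l a b c : c != 0 -> dvd (c * a) (c * b) -> dvd a b.
Proof. by move=> c0; rewrite ![c * _]mulrC; apply: dvd_cancel. Qed.
Lemma dvd_pmul a b c : dvd a b -> dvd (a * c) (b * c).
Proof. by move=> [k ->]; exists k; rewrite mulrA. Qed.

Lemma ideal_dvd a : is_ideal (dvd a).
Proof.
split; first exact: dvd0.
by split=> [x y|r x]; [apply: dvdD | apply: dvd_mull].
Qed.
Lemma ideal_zero : is_ideal (fun x : R => x = 0).
Proof. by split=> //; split=> [x y -> ->|r x ->]; rewrite ?addr0 ?mulr0. Qed.

Definition coprime a b := exists u v, u * a + v * b = 1.
Definition lt_div a b := b != 0 /\ dvd a b /\ ~ dvd b a.

Lemma coprime_sym a b : coprime a b -> coprime b a.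
Proof. by move=> [u [v e]]; exists v, u; rewrite addrC. Qed.
Lemma coprime_dvd a b c : coprime a b -> dvd a (b * c) -> dvd a c.
Proof.
move=> [u [v e]] h; have -> : c = (c * u) * a + v * (b * c).
  by rewrite -[c in LHS]mulr1 -e; ring.
by apply: dvdD; [apply: dvd_mul_l | apply: dvd_mull].
Qed.
Lemma coprime_mul a b s : coprime a s -> coprime b s -> coprime (a * b) s.
Proof.
move=> [u [v e]] [u' [v' e']]; exists (u * u'), (u * a * v' + v * (u' * b + v' * s)).
rewrite -[1]mulr1 -{1}e -e'; ring.
Qed.
Lemma coprime1 s : coprime 1 s. Proof. by exists 1, 0; rewrite mul0r addr0 mulr1. Qed.
Lemma coprime_pow a s n : coprime a s -> coprime (a ^+ n) s.
Proof.
move=> h; elim: n => [|n IH]; first by rewrite expr0; apply: coprime1.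
by rewrite exprS; apply: coprime_mul.
Qed.

Section PID.
Hypothesis hR : is_PID R.

Lemma gcd_ex a b : exists g u v, dvd g a /\ dvd g b /\ g = u * a + v * b.
Proof.
pose I x := exists u v, x = u * a + v * b.
have II : is_ideal I.
  split; first by exists 0, 0; rewrite !mul0r addr0.
  split=> [x y [u [v ->]] [u' [v' ->]]|r x [u [v ->]]].
    by exists (u + u'), (v + v'); rewrite !mulrDl addrACA.
  by exists (r * u), (r * v); rewrite mulrDr !mulrA.
have [g hg] := hR II.
have [u [v eg]] : I g by apply/hg/dvd_refl.
exists g, u, v; split; last split=> //.
  by apply/hg; exists 1, 0; rewrite mul1r mul0r addr0.
by apply/hg; exists 0, 1; rewrite mul1r mul0r add0r.
Qed.

Lemma chain_wf (rel : R -> R -> Prop) :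
  (forall x, ~ Acc rel x -> exists y, rel y x /\ ~ Acc rel y) -> forall c, ~ Acc rel c ->
  exists s : nat -> R, forall n, rel (s n.+1) (s n).
Proof.
move=> step c nA.
have next : forall w : {z | ~ Acc rel z}, {w2 : {z | ~ Acc rel z} | rel (sval w2) (sval w)}.
  move=> [z nz]; have [z2 [rz nz2]] := cid (step z nz).
  by exists (exist _ z2 nz2).
exists (fun n => sval (iter n (fun w => sval (next w)) (exist _ c nA))).
move=> n; rewrite iterS; exact: (svalP (next _)).
Qed.

Lemma wf_lt_div : well_founded lt_div.
Proof.
move=> c; case: (lem (Acc lt_div c)) => [//|nA]; exfalso.
have step x : ~ Acc lt_div x -> exists y, lt_div y x /\ ~ Acc lt_div y.
  move=> nx; case: (lem (exists y, lt_div y x /\ ~ Acc lt_div y)) => [h|H]; first exact: h.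
  exfalso; apply: nx; constructor => y hy.
  case: (lem (Acc lt_div y)) => [h|ny]; first exact: h.
  by exfalso; apply: H; exists y.
have [s sS] := chain_wf step nA.
have sD n k : dvd (s (n + k)%N) (s n).
  elim: k => [|k IH]; first by rewrite addn0; apply: dvd_refl.
  by rewrite addnS; apply: dvd_trans IH; case: (sS (n + k)%N) => _ [].
pose I x := exists n, dvd (s n) x.
have II : is_ideal I.
  split; first by exists 0%N; apply: dvd0.
  split=> [x y [n hn] [m hm]|r x [n hn]]; last by exists n; apply: dvd_mull.
  exists (n + m)%N; apply: dvdD.
    by apply: dvd_trans hn; apply: sD.
  by rewrite addnC; apply: dvd_trans hm; apply: sD.
have [a ha] := hR II.
have [N hN] : I a by apply/ha/dvd_refl.
have h1 : dvd a (s N.+1) by apply/ha; exists N.+1; apply: dvd_refl.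
by case: (sS N) => _ [_]; apply; apply: dvd_trans h1.
Qed.

Definition irred c := c != 0 /\ ~ c \is a GRing.unit /\
  forall d e, c = d * e -> d \is a GRing.unit \/ e \is a GRing.unit.

Lemma irred_prime c : irred c -> is_prime_elt c.
Proof.
move=> [c0 [cu ci]]; split=> //; split=> // a b hab.
have [g [u [v [gc [ga eg]]]]] := gcd_ex c a.
case: gc => h ech; case: (ci h g ech) => hu.
  left; apply: dvd_trans ga; exists h^-1; by rewrite ech mulrA mulVr ?mul1r.
right.
have hbg : dvd c (b * g).
  rewrite eg mulrDr; apply: dvdD; first by exists (b * u); ring.
  have -> : b * (v * a) = v * (a * b) by ring.
  by apply: dvd_mull.
have : dvd c (b * g * g^-1) by apply: dvd_mulr.
by rewrite -mulrA mulrV // mulr1.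
Qed.

Lemma prime_coprime p s : is_prime_elt p -> ~ dvd p s -> coprime p s.
Proof.
move=> [p0 [pu pp]] nps.
have [g [u [v [gp [gs eg]]]]] := gcd_ex p s.
case: (gp) => e ep.
case: (pp e g); first by rewrite -ep; apply: dvd_refl.
  move=> [f ef]; have e1 : 1 = f * g.
    by apply: (mulIf p0); rewrite mul1r {1}ep ef; ring.
  by exists (f * u), (f * v); rewrite e1 eg; ring.
by move=> pg; exfalso; apply: nps; apply: dvd_trans gs.
Qed.

Lemma prime_dvd_pow p q n : is_prime_elt p -> dvd p (q ^+ n) -> dvd p q.
Proof.
move=> hp; elim: n => [|n IH]; first by rewrite expr0 => /dvd1U; case: hp => _ [].
by rewrite exprS; case: hp => _ [_ pp] /pp [//|/IH].
Qed.

Lemma div_pow p : is_prime_elt p -> forall i g, dvd g (p ^+ i.+1) -> dvd (p ^+ i.+1) g \/ dvd g (p ^+ i).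
Proof.
move=> hp; have [p0 [pu pp]] := hp.
have cop g : ~ dvd p g -> forall i, dvd g (p ^+ i.+1) -> dvd g (p ^+ i).
  move=> npg i h; apply: (coprime_dvd (b := p)); first by apply/coprime_sym/prime_coprime.
  by rewrite -exprS.
elim=> [|i IH] g h.
  case: (lem (dvd p g)) => [pg|npg]; first by left; rewrite expr1.
  by right; apply: cop.
case: (lem (dvd p g)) => [[g' eg]|npg]; last by right; apply: cop.
have p0' : p != 0 by [].
move: h; rewrite eg [p ^+ _.+2]exprSr => h.
case: (IH g' (dvd_cancel p0' h)) => h2.
  by left; apply: dvd_pmul.
by right; rewrite exprSr; apply: dvd_pmul.
Qed.

Lemma val_dec p r : ~ p \is a GRing.unit -> p != 0 -> r != 0 ->
  exists k s, r = p ^+ k * s /\ ~ dvd p s.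
Proof.
move=> pu p0; elim/(well_founded_ind wf_lt_div): r => r IH r0.
case: (lem (dvd p r)) => [[r' er]|npr]; last by exists 0%N, r; rewrite expr0 mul1r.
have r'0 : r' != 0 by apply: contraNneq r0 => e; rewrite er e mul0r.
have [|//|k [s [es ns]]] := IH r'.
  split=> //; split; first by rewrite er; apply: dvd_mul_r.
  move=> [t et]; apply: pu; apply/dvd1U; exists t.
  by apply: (mulIf r'0); rewrite mul1r {1}et er; ring.
by exists k.+1, s; split=> //; rewrite er es exprSr; ring.
Qed.

Lemma prime_maximal p : is_prime_elt p -> is_maximal_ideal (dvd p).
Proof.
move=> [p0 [pu pp]]; split; first exact: ideal_dvd.
split; first by move/dvd1U.
move=> J hJ sJ; have [d hd] := hR hJ.
have : dvd d p by apply/hd/sJ/dvd_refl.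
move=> [e ep]; case: (pp e d); first by rewrite -ep; apply: dvd_refl.
  move=> [f ef]; right; apply/hd; exists f.
  by apply: (mulIf p0); rewrite mul1r {1}ep ef; ring.
by move=> pd; left => x /hd dx; apply: dvd_trans dx.
Qed.

Lemma prime_ideal_char P : is_prime_ideal P ->
  (forall x, P x <-> x = 0) \/ exists p, is_prime_elt p /\ forall x, P x <-> dvd p x.
Proof.
move=> [hI [n1 pr]]; have [a ha] := hR hI.
case: (eqVneq a 0) => [a0|a0].
  left=> x; rewrite ha a0; split=> [[k ->]|->]; rewrite ?mulr0 //; exact: dvd0.
right; exists a; split=> //; split=> //; split.
  by move/dvd1U => h; apply: n1; apply/ha.
by move=> x y /ha/pr [] /ha; [left|right].
Qed.

End PID.

Lemma zero_prime : is_prime_ideal (fun x : R => x = 0).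
Proof.
split; first exact: ideal_zero.
split; first by move/eqP; rewrite oner_eq0.
by move=> a b /eqP; rewrite mulf_eq0 => /orP [] /eqP; [left|right].
Qed.

Lemma prime_elt_ideal p : is_prime_elt p -> is_prime_ideal (dvd p).
Proof.
move=> [p0 [pu pp]]; split; first exact: ideal_dvd.
by split; [move/dvd1U|].
Qed.

End Ring.

Section Zm.
Variable V : zmodType.
Implicit Types x y a b c : V.
Lemma zm1 x x' y : x' - y = (x - y) - (x - x').
Proof. by rewrite opprB [RHS]addrC -addrA addKr. Qed.
Lemma zm2 x x' y : x - y = (x' - y) + (x - x').
Proof. by rewrite [RHS]addrC -addrA addKr. Qed.
Lemma zm3 x y c : x - y = (x - c) - (y - c).
Proof. by rewrite opprB -addrA addKr. Qed.
Lemma zm4 a b x y : a + b - (x + y) = (a - x) + (b - y).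
Proof. by rewrite opprD addrACA. Qed.
Lemma zm5 a x : - a - - x = - (a - x).
Proof. by rewrite opprB opprK [LHS]addrC. Qed.
End Zm.

Section Mods.
Variable R : idomainType.

Record submod (M : lmodType R) := SubMod {
  sm :> M -> Prop;
  sm0 : sm 0;
  smD : forall x y, sm x -> sm y -> sm (x + y);
  smZ : forall (a : R) x, sm x -> sm (a *: x) }.

Lemma smN (M : lmodType R) (S : submod M) x : S x -> S (- x).
Proof. move=> h; rewrite -scaleN1r; exact: smZ. Qed.
Lemma smB (M : lmodType R) (S : submod M) x y : S x -> S y -> S (x - y).
Proof. by move=> h1 h2; apply: smD => //; apply: smN. Qed.

Section SubT.
Variables (M : lmodType R) (S : submod M).
Definition subT := {x : M | S x}.
HB.instance Definition _ := gen_eqMixin subT.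
HB.instance Definition _ := gen_choiceMixin subT.
Lemma subT_inj (x y : subT) : sval x = sval y -> x = y.
Proof. case: x y => [x px] [y py] /= e; subst; congr exist; exact: Prop_irrelevance. Qed.
Definition sub0 : subT := exist _ 0 (sm0 S).
Definition subopp (x : subT) : subT := exist _ (- sval x) (smN (svalP x)).
Definition subadd (x y : subT) : subT := exist _ (sval x + sval y) (smD (svalP x) (svalP y)).
Definition subscale (a : R) (x : subT) : subT := exist _ (a *: sval x) (smZ a (svalP x)).
Lemma subaddA : associative subadd. Proof. by move=> x y z; apply: subT_inj; rewrite /= addrA. Qed.
Lemma subaddC : commutative subadd. Proof. by move=> x y; apply: subT_inj; rewrite /= addrC. Qed.
Lemma subadd0 : left_id sub0 subadd. Proof. by move=> x; apply: subT_inj; rewrite /= add0r. Qed.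
Lemma subaddN : left_inverse sub0 subopp subadd. Proof. by move=> x; apply: subT_inj; rewrite /= addNr. Qed.
HB.instance Definition _ := GRing.isZmodule.Build subT subaddA subaddC subadd0 subaddN.
Lemma subscaleA a b (x : subT) : subscale a (subscale b x) = subscale (a * b) x.
Proof. by apply: subT_inj; rewrite /= scalerA. Qed.
Lemma subscale1 : left_id 1 subscale. Proof. by move=> x; apply: subT_inj; rewrite /= scale1r. Qed.
Lemma subscaleDr : right_distributive subscale +%R. Proof. by move=> a x y; apply: subT_inj; rewrite /= scalerDr. Qed.
Lemma subscaleDl (x : subT) : {morph subscale^~ x : a b / a + b}. Proof. by move=> a b; apply: subT_inj; rewrite /= scalerDl. Qed.
HB.instance Definition _ := GRing.Zmodule_isLmodule.Build R subT subscaleA subscale1 subscaleDr subscaleDl.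
Lemma sval_lin : lin (fun x : subT => sval x). Proof. by []. Qed.
Lemma sval_inj : injective (fun x : subT => sval x). Proof. by move=> x y; apply: subT_inj. Qed.
Lemma sval0 : sval (0 : subT) = 0. Proof. by []. Qed.
Definition lift (x : M) : subT :=
  match pselect (S x) with left h => exist _ x h | right _ => 0 end.
Lemma liftK x : S x -> sval (lift x) = x.
Proof. by rewrite /lift; case: pselect. Qed.
End SubT.

Section Quo.
Variables (M : lmodType R) (S : submod M).
Lemma canon_ex (x : M) : exists y, `[< S (x - y) >].
Proof. by exists x; apply/asboolP; rewrite subrr; exact: sm0. Qed.
Definition canon x := xchoose (canon_ex x).
Lemma canon_spec x : S (x - canon x).
Proof. by have /asboolP := xchooseP (canon_ex x). Qed.
Lemma canon_eq x x' : S (x - x') -> canon x = canon x'.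
Proof.
move=> h; apply: eq_xchoose => y; apply/asboolP/asboolP => h2.
  by rewrite (zm1 x); apply: smB.
by rewrite (zm2 x x'); apply: smD.
Qed.
Lemma canon_idem x : canon (canon x) = canon x.
Proof. apply: canon_eq; rewrite -opprB; apply: smN; exact: canon_spec. Qed.
Definition quoT := {x : M | canon x = x}.
HB.instance Definition _ := gen_eqMixin quoT.
HB.instance Definition _ := gen_choiceMixin quoT.
Lemma quoT_inj (x y : quoT) : sval x = sval y -> x = y.
Proof. case: x y => [x px] [y py] /= e; subst; congr exist; exact: Prop_irrelevance. Qed.
Definition pi (x : M) : quoT := exist _ (canon x) (canon_idem x).
Lemma pi_eq x y : pi x = pi y <-> S (x - y).
Proof.
split=> [e|h]; last by apply: quoT_inj; apply: canon_eq.
have e' : canon x = canon y by have := congr1 sval e.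
rewrite (zm3 x y (canon x)) {2}e'.
by apply: smB; apply: canon_spec.
Qed.
Lemma pi_val q : pi (sval q) = q.
Proof. by apply: quoT_inj; rewrite /= (svalP q). Qed.
Lemma pi_surj q : exists x, q = pi x.
Proof. by exists (sval q); rewrite pi_val. Qed.
Definition qadd (a b : quoT) := pi (sval a + sval b).
Definition qopp (a : quoT) := pi (- sval a).
Definition qzero := pi 0.
Definition qscale (r : R) (a : quoT) := pi (r *: sval a).
Lemma sval_pi x : S (sval (pi x) - x).
Proof. by rewrite -opprB; apply: smN; apply: canon_spec. Qed.
Lemma qaddE x y : qadd (pi x) (pi y) = pi (x + y).
Proof.
apply/pi_eq; rewrite zm4.
by apply: smD; apply: sval_pi.
Qed.
Lemma qoppE x : qopp (pi x) = pi (- x).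
Proof.
apply/pi_eq; rewrite zm5.
by apply: smN; apply: sval_pi.
Qed.
Lemma qscaleE r x : qscale r (pi x) = pi (r *: x).
Proof. by apply/pi_eq; rewrite -scalerBr; apply: smZ; apply: sval_pi. Qed.
Lemma qaddA : associative qadd.
Proof. by move=> a b c; case: (pi_surj a) (pi_surj b) (pi_surj c) => [x ->] [y ->] [z ->]; rewrite !qaddE addrA. Qed.
Lemma qaddC : commutative qadd.
Proof. by move=> a b; case: (pi_surj a) (pi_surj b) => [x ->] [y ->]; rewrite !qaddE addrC. Qed.
Lemma qadd0 : left_id qzero qadd.
Proof. by move=> a; case: (pi_surj a) => [x ->]; rewrite /qzero qaddE add0r. Qed.
Lemma qaddN : left_inverse qzero qopp qadd.
Proof. by move=> a; case: (pi_surj a) => [x ->]; rewrite qoppE qaddE addNr. Qed.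
HB.instance Definition _ := GRing.isZmodule.Build quoT qaddA qaddC qadd0 qaddN.
Lemma piD x y : pi (x + y) = pi x + pi y. Proof. by rewrite -qaddE. Qed.
Lemma qscaleA a b (x : quoT) : qscale a (qscale b x) = qscale (a * b) x.
Proof. by case: (pi_surj x) => [y ->]; rewrite !qscaleE scalerA. Qed.
Lemma qscale1 : left_id 1 qscale.
Proof. by move=> x; case: (pi_surj x) => [y ->]; rewrite !qscaleE scale1r. Qed.
Lemma qscaleDr : right_distributive qscale +%R.
Proof. by move=> a x y; case: (pi_surj x) (pi_surj y) => [u ->] [v ->]; rewrite -piD !qscaleE -piD scalerDr. Qed.
Lemma qscaleDl (x : quoT) : {morph qscale^~ x : a b / a + b}.
Proof. by move=> a b; case: (pi_surj x) => [u ->]; rewrite !qscaleE -piD scalerDl. Qed.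
HB.instance Definition _ := GRing.Zmodule_isLmodule.Build R quoT qscaleA qscale1 qscaleDr qscaleDl.
Lemma piZ a x : pi (a *: x) = a *: pi x. Proof. by rewrite -qscaleE. Qed.
Lemma pi_lin : lin pi. Proof. by move=> a x y; rewrite piD piZ. Qed.
Lemma pi0 x : pi x = 0 <-> S x.
Proof. by have := pi_eq x 0; rewrite subr0. Qed.
Definition quo_lift (T : lmodType R) (psi : M -> T) (q : quoT) := psi (sval q).
End Quo.
End Mods.

Lemma zm6 (V : zmodType) (a b c : V) : a + b - (a + c) = b - c.
Proof. by rewrite opprD addrACA subrr add0r. Qed.

Section Lin.
Variable R : idomainType.
Implicit Types M N T : lmodType R.

Lemma lin0 M N (f : M -> N) : lin f -> f 0 = 0.
Proof.
move=> hf; have e := hf 1 0 0; rewrite !scale1r addr0 in e.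
by apply: (addrI (f 0)); rewrite addr0 -e.
Qed.
Lemma linD M N (f : M -> N) x y : lin f -> f (x + y) = f x + f y.
Proof. by move=> hf; have := hf 1 x y; rewrite !scale1r. Qed.
Lemma linZ M N (f : M -> N) a x : lin f -> f (a *: x) = a *: f x.
Proof. by move=> hf; rewrite -[a *: x]addr0 hf lin0 // addr0. Qed.
Lemma linN M N (f : M -> N) x : lin f -> f (- x) = - f x.
Proof. by move=> hf; rewrite -scaleN1r linZ // scaleN1r. Qed.
Lemma linB M N (f : M -> N) x y : lin f -> f (x - y) = f x - f y.
Proof. by move=> hf; rewrite linD // linN. Qed.
Lemma lin_comp M N T (f : M -> N) (g : N -> T) : lin f -> lin g -> lin (g \o f).
Proof. by move=> hf hg a x y; rewrite /= hf hg. Qed.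

Definition linOn M T (P : M -> Prop) (h : M -> T) :=
  forall a x y, P x -> P y -> h (a *: x + y) = a *: h x + h y.

Lemma linOn0 M T (P : submod M) (h : M -> T) : linOn P h -> h 0 = 0.
Proof.
move=> hf; have e := hf 1 0 0 (sm0 P) (sm0 P); rewrite !scale1r addr0 in e.
by apply: (addrI (h 0)); rewrite addr0 -e.
Qed.
Lemma linOnZ M T (P : submod M) (h : M -> T) a x : linOn P h -> P x -> h (a *: x) = a *: h x.
Proof. by move=> hf px; rewrite -[a *: x]addr0 hf ?(linOn0 hf) ?addr0 //; exact: sm0. Qed.
Lemma linOnD M T (P : M -> Prop) (h : M -> T) x y : linOn P h -> P x -> P y -> h (x + y) = h x + h y.
Proof. by move=> hf px py; have := hf 1 x y px py; rewrite !scale1r. Qed.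
Lemma linOn_lin M T (h : M -> T) : linOn (fun _ => True) h -> lin h.
Proof. by move=> hf a x y; apply: hf. Qed.
Lemma linOn_sub M T (P Q : M -> Prop) (h : M -> T) : (forall x, Q x -> P x) -> linOn P h -> linOn Q h.
Proof. by move=> hQ hf a x y qx qy; apply: hf; apply: hQ. Qed.

Definition surj M N (f : M -> N) := forall z, exists y, f y = z.

Lemma inj_surj_bij M N (f : M -> N) : injective f -> surj f -> bijective f.
Proof.
move=> fi fs; have [g hg] := choice fs.
by exists g => [x|y]; [apply: fi; rewrite hg|rewrite hg].
Qed.

Definition ker_sm M N (f : M -> N) (hf : lin f) : submod M.
Proof.
refine (@SubMod _ M (fun x => f x = 0) _ _ _).
- exact: lin0.
- by move=> x y h1 h2; rewrite linD // h1 h2 addr0.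
- by move=> a x h; rewrite linZ // h scaler0.
Defined.

Definition img_sm M N (f : M -> N) (hf : lin f) : submod N.
Proof.
refine (@SubMod _ N (fun y => exists x, y = f x) _ _ _).
- by exists 0; rewrite lin0.
- by move=> x y [u ->] [v ->]; exists (u + v); rewrite linD.
- by move=> a x [u ->]; exists (a *: u); rewrite linZ.
Defined.

Definition smI M (P Q : submod M) : submod M.
Proof.
refine (@SubMod _ M (fun x => P x /\ Q x) _ _ _).
- by split; apply: sm0.
- by move=> x y [h1 h2] [h3 h4]; split; apply: smD.
- by move=> a x [h1 h2]; split; apply: smZ.
Defined.

Definition kill_sm M (a : R) : submod M.
Proof.
refine (@SubMod _ M (fun x => a *: x = 0) _ _ _).
- exact: scaler0.
- by move=> x y h1 h2; rewrite scalerDr h1 h2 addr0.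
- by move=> b x h; rewrite scalerA mulrC -scalerA h scaler0.
Defined.

Definition dvd_sm (c : R) : submod R^o.
Proof.
refine (@SubMod _ R^o (fun x => dvd c x) _ _ _).
- exact: dvd0.
- by move=> x y; apply: dvdD.
- by move=> a x h; apply: dvd_mull.
Defined.

Fixpoint span M (s : seq M) : M -> Prop :=
  match s with
  | [::] => fun x => x = 0
  | y :: s' => fun x => exists r z, span s' z /\ x = r *: y + z
  end.

Lemma span0 M (s : seq M) : span s 0.
Proof. elim: s => [|y s IH] //=; by exists 0, 0; rewrite scale0r addr0. Qed.
Lemma spanD M (s : seq M) x y : span s x -> span s y -> span s (x + y).
Proof.
elim: s x y => [|u s IH] x y /=; first by move=> -> ->; rewrite addr0.
move=> [r [z [hz ->]]] [r' [z' [hz' ->]]]; exists (r + r'), (z + z'); split; first exact: IH.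
by rewrite scalerDl addrACA.
Qed.
Lemma spanZ M (s : seq M) a x : span s x -> span s (a *: x).
Proof.
elim: s x => [|u s IH] x /=; first by move=> ->; rewrite scaler0.
move=> [r [z [hz ->]]]; exists (a * r), (a *: z); split; first exact: IH.
by rewrite scalerDr scalerA.
Qed.
Definition span_sm M (s : seq M) : submod M := SubMod (@span0 M s) (@spanD M s) (@spanZ M s).

Lemma span_head M (y : M) s : span (y :: s) y.
Proof. by exists 1, 0; split; [apply: span0|rewrite scale1r addr0]. Qed.
Lemma span_cons M (y : M) s z : span s z -> span (y :: s) z.
Proof. by move=> h; exists 0, z; rewrite scale0r add0r. Qed.
Lemma span_mem M (s : seq M) y : y \in s -> span s y.
Proof.
elim: s => [|u s IH] //; rewrite inE => /orP [/eqP ->|/IH h]; first exact: span_head.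
exact: span_cons.
Qed.
Lemma span_sub M (Q : submod M) (s : seq M) : (forall y, y \in s -> Q y) -> forall x, span s x -> Q x.
Proof.
elim: s => [|u s IH] hs x /=; first by move=> ->; exact: sm0.
move=> [r [z [hz ->]]]; apply: smD; first by apply: smZ; apply: hs; rewrite inE eqxx.
by apply: IH => // y hy; apply: hs; rewrite inE hy orbT.
Qed.
Lemma span_incl M (s t : seq M) x : (forall z, z \in s -> z \in t) -> span s x -> span t x.
Proof.
move=> h; apply: (span_sub (Q := span_sm t)) => z hz; apply: span_mem; exact: h.
Qed.
Lemma span_swap M (a b : M) s x : span (a :: b :: s) x -> span (b :: a :: s) x.
Proof.
move=> [r [z [[r' [z' [h ->]]] ->]]]; exists r', (r *: a + z'); split.
  by exists r, z'.
by rewrite addrCA.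
Qed.
Lemma span_map M N (f : M -> N) (s : seq M) x : lin f -> span s x -> span (map f s) (f x).
Proof.
move=> hf; elim: s x => [|u s IH] x /=; first by move=> ->; rewrite lin0.
by move=> [r [z [hz ->]]]; exists r, (f z); split; [apply: IH|rewrite hf].
Qed.
Lemma span_map_inj M N (f : M -> N) (s : seq M) x : lin f -> injective f -> span (map f s) (f x) -> span s x.
Proof.
move=> hf fi; elim: s x => [|u s IH] x /=; first by rewrite -(lin0 hf) => /fi.
move=> [r [z [hz e]]]; exists r, (x - r *: u); split; last by rewrite addrC subrK.
by apply: IH; rewrite linB // linZ // e addrC addKr.
Qed.

Lemma fg_span M : fin_gen M <-> exists s : seq M, forall x, span s x.
Proof.
split=> [[n [v hv]]|[s hs]].
  exists [seq v i | i <- enum 'I_n] => x; have [a ->] := hv x.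
  apply: (big_ind (fun x => span _ x)); [exact: span0|exact: spanD|] => i _.
  by apply: spanZ; apply: span_mem; apply: map_f; rewrite mem_enum.
exists (size s), (fun i => nth 0 s i) => m.
have : span s m by [].
elim: s {hs} m => [|y s IH] m /=.
  by move=> ->; exists (fun=> 0); rewrite big_ord0.
move=> [r [z [hz ->]]]; have [a ->] := IH z hz.
exists (fun i : 'I_(size s).+1 => if (i : nat) is k.+1 then
   (if insub k is Some j then a j else 0) else r).
rewrite big_ord_recl /=; congr (_ + _); apply: eq_bigr => i _ /=.
by rewrite valK.
Qed.

Lemma fg_surj M N (q : M -> N) : lin q -> surj q -> fin_gen M -> fin_gen N.
Proof.
move=> hq qs /fg_span [s hs]; apply/fg_span; exists (map q s) => z.
by have [y <-] := qs z; apply: span_map.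
Qed.

Lemma fg_zero M : (forall x : M, x = 0) -> fin_gen M.
Proof. by move=> h; apply/fg_span; exists [::]. Qed.

Lemma pairE M N (a : R) (u u' : M) (v v' : N) :
  (a *: (u, v) + (u', v') : M * N) = (a *: u + u', a *: v + v').
Proof. by []. Qed.

Lemma fg_prod M N : fin_gen M -> fin_gen N -> fin_gen (M * N)%type.
Proof.
move=> /fg_span [s hs] /fg_span [t ht]; apply/fg_span.
exists (map (fun x => (x, 0 : N)) s ++ map (fun y => (0 : M, y)) t) => [[x y]].
have e : ((x, 0) + (0, y) : M * N) = (x + 0, 0 + y) by [].
rewrite addr0 add0r in e; rewrite -e.
apply: spanD.
  apply: (@span_incl _ (map (fun x => (x, 0 : N)) s)); first by move=> z hz; rewrite mem_cat hz.
  by apply: (span_map (f := fun x : M => (x, 0 : N))) => // a u v; rewrite pairE scaler0 addr0.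
apply: (@span_incl _ (map (fun y => (0 : M, y)) t)); first by move=> z hz; rewrite mem_cat hz orbT.
by apply: (span_map (f := fun y : N => (0 : M, y))) => // a u v; rewrite pairE scaler0 addr0.
Qed.

Section PIDm.
Hypothesis hR : is_PID R.

Lemma noeth M (s : seq M) (P : submod M) : (forall x, P x -> span s x) ->
  exists t : seq M, forall x, P x <-> span t x.
Proof.
elim: s P => [|y s IH] P hP.
  exists [::] => x; split=> [/hP //|/= ->]; exact: sm0.
pose I r := exists z z', P z /\ span s z' /\ z = r *: y + z'.
have II : is_ideal I.
  split; first by exists 0, 0; rewrite scale0r addr0; split; [exact: sm0|split; [exact: span0|]].
  split=> [a b [z [z' [pz [sz ez]]]] [w [w' [pw [sw ew]]]]|r a [z [z' [pz [sz ez]]]]].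
    exists (z + w), (z' + w'); split; first exact: smD.
    by split; [exact: spanD|rewrite ez ew scalerDl addrACA].
  exists (r *: z), (r *: z'); split; first exact: smZ.
  by split; [exact: spanZ|rewrite ez scalerDr scalerA].
have [c hc] := hR II.
have [x0 [x0' [px0 [sx0 ex0]]]] : I c by apply/hc/dvd_refl.
have [t ht] := IH (smI P (span_sm s)) (fun x h => proj2 h).
exists (x0 :: t) => x; split.
  move=> px; have [r [z [hz ex]]] := hP x px.
  have [k ek] : dvd c r by apply/hc; exists x, z.
  exists k, (x - k *: x0); split; last by rewrite addrC subrK.
  apply/ht; split; first by apply: smB => //; apply: smZ.
  have -> : x - k *: x0 = z - k *: x0' by rewrite ex ex0 ek scalerDr scalerA zm6.
  by apply: (smB (S := span_sm s)) => //; apply: spanZ.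
move=> [r [z [hz ->]]]; apply: smD; first exact: smZ.
by have /ht [] := hz.
Qed.

End PIDm.
End Lin.

Section D.
Variable R : idomainType.
Implicit Types M N T : lmodType R.

Lemma preimage M N (k : N -> M) : exists pre : M -> N, forall u, (exists z, u = k z) -> u = k (pre u).
Proof.
have [pre hpre] := choice (P := fun u z => (exists z', u = k z') -> u = k z) (fun u =>
  match lem (exists z', u = k z') with
  | or_introl (ex_intro z' e) => ex_intro _ z' (fun _ => e)
  | or_intror n => ex_intro _ 0 (fun h => False_ind _ (n h)) end).
by exists pre.
Qed.

Section PIDD.
Hypothesis hR : is_PID R.

Lemma fg_inj M N (k : N -> M) : lin k -> injective k -> fin_gen M -> fin_gen N.
Proof.
move=> hk ki /fg_span [s hs].
have [t ht] := noeth hR (P := img_sm hk) (s := s) (fun x _ => hs x).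
have [pre hpre] := preimage k.
apply/fg_span; exists (map pre t) => z.
apply: (span_map_inj hk ki).
have -> : map k (map pre t) = t.
  rewrite -map_comp -[RHS]map_id; apply/eq_in_map => u ut /=.
  by rewrite -hpre //; apply/(ht u)/span_mem.
by apply/ht; exists z.
Qed.

Lemma fg_sub M (S : submod M) : fin_gen M -> fin_gen (subT S).
Proof. by apply: fg_inj; [exact: sval_lin|exact: sval_inj]. Qed.
End PIDD.

Lemma pi_lin' M (S : submod M) : lin (@pi _ _ S). Proof. exact: pi_lin. Qed.

Lemma fg_quo M (S : submod M) : fin_gen M -> fin_gen (quoT S).
Proof.
apply: fg_surj; first exact: pi_lin.
by move=> q; have [x ->] := pi_surj q; exists x.
Qed.

Lemma quo_liftE M T (S : submod M) (psi : M -> T) x : lin psi -> (forall x, S x -> psi x = 0) ->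
  quo_lift (S := S) psi (pi S x) = psi x.
Proof.
move=> hp hk; rewrite /quo_lift; apply/eqP; rewrite -subr_eq0 -linB //.
by apply/eqP/hk; apply: sval_pi.
Qed.

Lemma quo_lift_lin M T (S : submod M) (psi : M -> T) : lin psi -> (forall x, S x -> psi x = 0) ->
  lin (quo_lift (S := S) psi).
Proof.
move=> hp hk a q q'; have [x ->] := pi_surj q; have [y ->] := pi_surj q'.
by rewrite -piZ -piD !quo_liftE.
Qed.

Definition RQ (c : R) := quoT (dvd_sm c).
Definition piR (c : R) (x : R^o) : RQ c := pi (dvd_sm c) x.

Lemma piR_eq c x y : piR c x = piR c y <-> dvd c (x - y).
Proof. exact: pi_eq. Qed.
Lemma piR0 c x : piR c x = 0 <-> dvd c x.
Proof. exact: pi0. Qed.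
Lemma piR_surj c (q : RQ c) : exists x, q = piR c x.
Proof. by case: (pi_surj q) => x ->; exists x. Qed.
Lemma piR_lin c : lin (piR c). Proof. exact: pi_lin. Qed.
Lemma piRD c x y : piR c (x + y) = piR c x + piR c y. Proof. exact: piD. Qed.
Lemma piRZ c (a x : R) : piR c (a * x) = a *: piR c x. Proof. exact: piZ. Qed.
Lemma piR1 c (a : R) : a *: piR c 1 = piR c a. Proof. by rewrite -piRZ mulr1. Qed.

Lemma fg_RQ c : fin_gen (RQ c).
Proof.
apply/fg_span; exists [:: piR c 1] => q; have [x ->] := piR_surj q.
by exists x, 0; split=> //; rewrite addr0 piR1.
Qed.
Lemma fg_R : fin_gen (R^o).
Proof. by apply/fg_span; exists [:: (1 : R^o)] => x; exists x, 0; split=> //; rewrite addr0; exact/esym/mulr1. Qed.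

Definition liftR (c : R) T (psi : R^o -> T) : RQ c -> T := quo_lift (S := dvd_sm c) psi.
Arguments liftR c {T} psi _.
Lemma liftRE (c : R) T (psi : R^o -> T) (x : R^o) : lin psi -> (forall x : R, dvd c x -> psi x = 0) ->
  liftR c psi (piR c x) = psi x.
Proof. by move=> hp hk; apply: (quo_liftE (S := dvd_sm c) x hp hk). Qed.
Lemma liftR_lin (c : R) T (psi : R^o -> T) : lin psi -> (forall x : R, dvd c x -> psi x = 0) -> lin (liftR c psi).
Proof. by move=> hp hk; apply: (quo_lift_lin (S := dvd_sm c) hp hk). Qed.

Lemma linOnB M T (N : M -> Prop) (h : M -> T) x y : linOn N h -> N x -> N y -> h (x - y) = h x - h y.
Proof. by move=> hl hx hy; have := hl (-1) y x hy hx; rewrite !scaleN1r => e; rewrite addrC e addrC. Qed.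

Lemma ext_lin M T (N : submod M) (h : M -> T) (y : M) (t : T) :
  linOn N h -> (forall r, N (r *: y) -> h (r *: y) = r *: t) ->
  exists h', linOn (fun z => exists r z', N z' /\ z = r *: y + z') h' /\
    forall r z', N z' -> h' (r *: y + z') = h z' + r *: t.
Proof.
move=> hl ht.
have wd r1 z1 r2 z2 : N z1 -> N z2 -> r1 *: y + z1 = r2 *: y + z2 -> h z1 + r1 *: t = h z2 + r2 *: t.
  move=> n1 n2 e.
  have e2 : (r1 - r2) *: y = z2 - z1.
    have e' : r1 *: y = r2 *: y + z2 - z1 by rewrite -e addrK.
    by rewrite scalerBl e' addrAC [r2 *: y + z2]addrC addrK.
  have : h ((r1 - r2) *: y) = (r1 - r2) *: t by apply: ht; rewrite e2; apply: smB.
  rewrite e2 (linOnB hl) // scalerBl => e3.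
  have -> : r1 *: t = (h z2 - h z1) + r2 *: t by rewrite e3 subrK.
  by rewrite addrA [h z1 + _]addrC subrK.
have ex z : exists p : R * M, (exists r z', N z' /\ z = r *: y + z') -> N p.2 /\ z = p.1 *: y + p.2.
  case: (lem (exists r z', N z' /\ z = r *: y + z')) => [[r [z' hz]]|n]; first by exists (r, z').
  by exists (0, 0) => h0; case: (n h0).
have [f hf] := choice ex.
have key r z' : N z' -> h (f (r *: y + z')).2 + (f (r *: y + z')).1 *: t = h z' + r *: t.
  move=> nz; have [n2 e] := hf (r *: y + z') (ex_intro _ r (ex_intro _ z' (conj nz erefl))).
  by apply: wd => //; rewrite -e.
exists (fun z => h (f z).2 + (f z).1 *: t); split; last exact: key.
move=> a x1 x2 [r1 [z1 [n1 ->]]] [r2 [z2 [n2 ->]]].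
have -> : a *: (r1 *: y + z1) + (r2 *: y + z2) = (a * r1 + r2) *: y + (a *: z1 + z2).
  by rewrite scalerDr scalerA addrACA scalerDl.
rewrite !key //; last by apply: smD => //; apply: smZ.
rewrite (linOnD hl) ?(linOnZ _ hl) //; last by apply: smZ.
by rewrite scalerDr scalerDl scalerA addrACA.
Qed.

Lemma split_iso M T (h : M -> T) (s : T -> M) (hl : lin h) : lin s -> (forall t, h (s t) = t) ->
  iso M (T * subT (ker_sm hl))%type.
Proof.
move=> sl hs.
have pf z : h (z - s (h z)) = 0 by rewrite linB // hs subrr.
exists (fun z => (h z, exist _ (z - s (h z)) (pf z) : subT (ker_sm hl))); split.
  move=> a x y; rewrite pairE; congr pair; first exact: hl.
  apply: subT_inj => /=; rewrite hl sl.
  by rewrite scalerBr addrACA opprD.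
apply: inj_surj_bij.
  by move=> x y [e1]; rewrite e1 => /addIr.
move=> [t k]; exists (s t + sval k).
have e : h (s t + sval k) = t by rewrite linD // hs (svalP k) addr0.
congr pair; first exact: e.
by apply: subT_inj => /=; rewrite e addrC addKr.
Qed.
End D.
Arguments liftR {R} c {T} psi _.

Section E.
Variable R : idomainType.
Implicit Types M N T Q K : lmodType R.
Hypothesis hR : is_PID R.

Lemma bij_surj M N (f : M -> N) : bijective f -> surj f.
Proof. by move=> [g _ hg] z; exists (g z). Qed.

Lemma ses_ker M Q (g : M -> Q) (S : submod M) : lin g -> surj g -> (forall y, g y = 0 <-> S y) ->
  fin_gen M -> fin_gen Q -> ses (fun x : subT S => sval x) g.
Proof.
move=> gl gs gk fM fQ; split; first exact: fg_sub.
split=> //; split=> //; split; first exact: sval_lin.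
split=> //; split; first exact: sval_inj.
split=> // y; split=> [/gk sy|[x ->]]; first by exists (exist _ y sy).
by apply/gk; exact: (svalP x).
Qed.

Lemma torsion_span M (s : seq M) : (forall y, y \in s -> exists r : R, r != 0 /\ r *: y = 0) ->
  exists A : R, A != 0 /\ forall x, span s x -> A *: x = 0.
Proof.
elim: s => [|y s IH] hs.
  by exists 1; split; [exact: oner_neq0|move=> x /= ->; rewrite scaler0].
have [r [r0 ry]] := hs y (mem_head _ _).
have [A [A0 hA]] : exists A : R, A != 0 /\ forall x, span s x -> A *: x = 0.
  by apply: IH => z hz; apply: hs; rewrite inE hz orbT.
exists (A * r); split; first by rewrite mulf_neq0.
move=> x [a [z [hz ->]]].
have h1 : (A * r) *: (a *: y) = 0 by rewrite scalerA mulrAC -scalerA ry scaler0.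
have h2 : (A * r) *: z = 0 by rewrite mulrC -scalerA hA ?scaler0.
by rewrite scalerDr h1 h2 addr0.
Qed.
Lemma fg_torsion_ann M : fin_gen M -> torsion M -> exists A : R, A != 0 /\ forall x : M, A *: x = 0.
Proof.
move=> /fg_span [s hs] ht; have [A [A0 hA]] := torsion_span (s := s) (fun y _ => ht y).
by exists A; split=> // x; apply: hA.
Qed.

Section ST.
Variable S : (R -> Prop) -> Prop.

Lemma st_inj M N (i : N -> M) : lin i -> injective i -> S_torsion S M -> S_torsion S N.
Proof.
move=> il ii [fM [tM pM]]; split; first exact: fg_inj il ii fM.
split.
  move=> m; have [r [r0 hr]] := tM (i m); exists r; split=> //.
  by apply: ii; rewrite linZ // hr lin0.
move=> p pp npS m [n hn]; apply: ii; rewrite lin0 //; apply: (pM p pp npS).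
by exists n; rewrite -linZ // hn lin0.
Qed.

Lemma st_surj M N (q : M -> N) : lin q -> surj q -> S_torsion S M -> S_torsion S N.
Proof.
move=> ql qs [fM [tM pM]]; split; first exact: fg_surj ql qs fM.
split.
  move=> z; have [y <-] := qs z; have [r [r0 hr]] := tM y; exists r; split=> //.
  by rewrite -linZ // hr lin0.
move=> p pp npS z [n hn]; have [y ey] := qs z; have [r [r0 hr]] := tM y.
have [pn0 [pu _]] := pp.
have [k [s [es ns]]] := val_dec hR pu pn0 r0.
have [u [v e]] : coprime (p ^+ n) s by apply: coprime_pow; apply: prime_coprime.
have sy : s *: y = 0.
  apply: (pM p pp npS); exists k; by rewrite scalerA -es.
have sz : s *: z = 0 by rewrite -ey -linZ // sy lin0.
by rewrite -[z]scale1r -e scalerDl -!scalerA hn sz !scaler0 addr0.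
Qed.

Lemma st_prod M N : S_torsion S M -> S_torsion S N -> S_torsion S (M * N)%type.
Proof.
move=> [fM [tM pM]] [fN [tN pN]]; split; first exact: fg_prod.
split.
  move=> [x y]; have [r [r0 hr]] := tM x; have [r' [r'0 hr']] := tN y.
  exists (r * r'); split; first by rewrite mulf_neq0.
  have -> : (r * r') *: (x, y) = ((r * r') *: x, (r * r') *: y) by [].
  have e1 : (r * r') *: x = 0 by rewrite mulrC -scalerA hr scaler0.
  have e2 : (r * r') *: y = 0 by rewrite -scalerA hr' scaler0.
  by rewrite e1 e2.
move=> p pp npS [x y] [n hn].
have e : (p ^+ n *: (x, y) : M * N) = (p ^+ n *: x, p ^+ n *: y) by [].
rewrite e in hn.
have h1 : p ^+ n *: x = 0 by have := congr1 fst hn.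
have h2 : p ^+ n *: y = 0 by have := congr1 snd hn.
have -> : x = 0 by apply: (pM p pp npS); exists n.
have -> : y = 0 by apply: (pN p pp npS); exists n.
by [].
Qed.

Lemma st_zero M : (forall x : M, x = 0) -> S_torsion S M.
Proof.
move=> h; split; first exact: fg_zero.
split; last by move=> *; apply: h.
by move=> m; exists 1; rewrite (h m) scaler0 oner_neq0.
Qed.

Lemma st_ses M1 M2 M3 (f : M1 -> M2) (g : M2 -> M3) : ses f g -> S_torsion S M1 -> S_torsion S M3 -> S_torsion S M2.
Proof.
move=> [_ [f2 [_ [fl [gl [fi [gs gk]]]]]]] [_ [t1 p1]] [_ [t3 p3]]; split=> //.
split.
  move=> m; have [r [r0 hr]] := t3 (g m).
  have [x ex] : exists x, r *: m = f x by apply/gk; rewrite linZ.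
  have [s [s0 hs]] := t1 x; exists (s * r); split; first by rewrite mulf_neq0.
  by rewrite -scalerA ex -linZ // hs lin0.
move=> p pp npS m [n hn].
have gm : g m = 0 by apply: (p3 p pp npS); exists n; rewrite -linZ // hn lin0.
have [x ex] := (gk m).1 gm; rewrite ex.
have -> : x = 0.
  apply: (p1 p pp npS); exists n; apply: fi; rewrite linZ // -ex hn lin0 //.
exact: lin0.
Qed.

Lemma serre_st : serre (S_torsion S).
Proof.
have fa : full_additive (S_torsion S).
  split; first by move=> M [].
  split; first by move=> M N [f [fl fb]]; apply: st_surj fl (bij_surj fb).
  by split; [exact: st_zero|exact: st_prod].
split; last split.
- split=> //; split.
    by move=> M N K f k hM _ _ [kl [ki _]]; apply: st_inj kl ki hM.
  split; first by move=> M N Q f q _ hN _ [ql [qs _]]; apply: st_surj ql qs hN.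
  by move=> M1 M2 M3 f g hs h1 h3; apply: st_ses hs h1 h3.
- by move=> N M i il ii; apply: st_inj.
- by move=> M N q ql qs; apply: st_surj.
Qed.
End ST.

Lemma serre_fgA : serre (@fgA R).
Proof.
have fa : full_additive (@fgA R).
  split; first by [].
  split; first by move=> M N [f [fl fb]]; apply: fg_surj fl (bij_surj fb).
  by split; [exact: fg_zero|exact: fg_prod].
split; last split.
- split=> //; split.
    by move=> M N K f k hM _ _ [kl [ki _]]; apply: fg_inj kl ki hM.
  split; first by move=> M N Q f q _ hN _ [ql [qs _]]; apply: fg_surj ql qs hN.
  by move=> M1 M2 M3 f g [_ [h _]].
- by move=> N M i il ii; apply: fg_inj.
- by move=> M N q ql qs; apply: fg_surj.
Qed.

Lemma wide_thick (C : subcat R) : wide C -> thick C.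
Proof.
move=> [fa [hk [hq he]]]; split; first split=> //.
  move=> M1 M2 M3 f g hs; have [_ [_ [_ [fl [gl [fi [gs gk]]]]]]] := hs.
  split; first by move=> c1 c2; apply: (hq M1 M2 M3 f g) => //.
  split; first by move=> c1 c3; apply: (he M1 M2 M3 f g).
  by move=> c2 c3; apply: (hk M2 M3 M1 g f).
move=> M N hMN.
pose f := fun z : (M * N)%type => ((0 : M), z.2).
pose q := fun z : (M * N)%type => z.1.
apply: (hq _ _ _ f q hMN hMN).
  by move=> a [x y] [x' y']; rewrite /f !pairE /= scaler0 addr0.
split; first by move=> a [x y] [x' y'].
split; first by move=> z; exists (z, 0).
move=> [x y]; rewrite /q /=; split=> [->|[[u v] [-> _]]] //.
by exists (0, y).
Qed.

End E.

Section F.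
Variable R : idomainType.
Implicit Types M N T Q K : lmodType R.
Hypothesis hR : is_PID R.
Implicit Type C : subcat R.
Implicit Types c : R.

Lemma thick_fg C M : thick C -> C M -> fin_gen M.
Proof. by move=> [[[h _] _] _]; apply: h. Qed.
Lemma thick_iso C M N : thick C -> iso M N -> C M -> C N.
Proof. by move=> [[[_ [h _]] _] _]; apply: h. Qed.
Lemma thick_zero C M : thick C -> (forall x : M, x = 0) -> C M.
Proof. by move=> [[[_ [_ [h _]]] _] _]; apply: h. Qed.
Lemma thick_prod C M N : thick C -> C M -> C N -> C (M * N)%type.
Proof. by move=> [[[_ [_ [_ h]]] _] _]; apply: h. Qed.
Lemma thick_summand C M N : thick C -> C (M * N)%type -> C M.
Proof. by move=> [_ h]; apply: h. Qed.
Lemma thick_ext C M1 M2 M3 (f : M1 -> M2) (g : M2 -> M3) : thick C -> ses f g -> C M1 -> C M3 -> C M2.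
Proof. by move=> [[_ h] _] hs; have [_ [h2 _]] := h _ _ _ f g hs. Qed.
Lemma thick_cok C M1 M2 M3 (f : M1 -> M2) (g : M2 -> M3) : thick C -> ses f g -> C M1 -> C M2 -> C M3.
Proof. by move=> [[_ h] _] hs; have [h2 _] := h _ _ _ f g hs. Qed.
Lemma thick_kr C M1 M2 M3 (f : M1 -> M2) (g : M2 -> M3) : thick C -> ses f g -> C M2 -> C M3 -> C M1.
Proof. by move=> [[_ h] _] hs; have [_ [_ h2]] := h _ _ _ f g hs. Qed.

Lemma RQ_zero c : c \is a GRing.unit -> forall q : RQ c, q = 0.
Proof. by move=> cu q; have [x ->] := piR_surj q; apply/piR0; apply: dvdU. Qed.

Lemma RQ_iso c c' : (forall x, dvd c x <-> dvd c' x) -> iso (RQ c) (RQ c').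
Proof.
move=> hcc.
have kl : forall x : R, dvd c x -> piR c' x = 0 by move=> x /hcc /piR0.
exists (liftR c (piR c')); split; first exact: liftR_lin (piR_lin c') kl.
apply: inj_surj_bij.
  move=> q q'; have [x ->] := piR_surj q; have [y ->] := piR_surj q'.
  by rewrite !liftRE //; try exact: piR_lin; move/piR_eq/hcc/piR_eq.
by move=> q; have [x ->] := piR_surj q; exists (piR c x); rewrite liftRE //; exact: piR_lin.
Qed.

Lemma RQ0_iso : iso (R^o) (RQ 0).
Proof.
exists (piR 0); split; first exact: piR_lin.
apply: inj_surj_bij; last by move=> q; have [x ->] := piR_surj q; exists x.
move=> x y /piR_eq [k]; rewrite mulr0 => /eqP; rewrite subr_eq0 => /eqP.
by [].
Qed.

Lemma ses_mulc c : c != 0 -> ses (fun x : R^o => (x * c : R^o)) (piR c).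
Proof.
move=> c0; split; first exact: fg_R.
split; first exact: fg_R.
split; first exact: fg_RQ.
split; first by move=> a x y; rewrite mulrDl; congr (_ + _); exact: (esym (mulrA _ _ _)).
split; first exact: piR_lin.
split; first by move=> x y /= /(mulIf c0).
split; first by move=> q; have [x ->] := piR_surj q; exists x.
by move=> y; rewrite piR0; split=> [[k ->]|[x ->]]; [exists k|exists x].
Qed.

Lemma gen_ind C (Phi : subcat R) : thick C ->
  (forall N M (i : N -> M), lin i -> injective i -> Phi M -> Phi N) ->
  (forall M N (q : M -> N), lin q -> surj q -> Phi M -> Phi N) ->
  (forall c, Phi (RQ c) -> C (RQ c)) ->
  forall n N (s : seq N), size s = n -> (forall x, span s x) -> Phi N -> C N.
Proof.
move=> tC hi hq hc; elim=> [|n IH] N s hs sp phi.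
  move: hs sp => /size0nil -> sp; apply: (thick_zero tC) => x; exact: (sp x).
case: s hs sp => [//|y s'] [hs] sp.
pose I r := span s' (r *: y).
have II : is_ideal I.
  split; first by rewrite /I scale0r; apply: span0.
  split=> [a b ha hb|r a ha]; first by rewrite /I scalerDl; apply: spanD.
  by rewrite /I -scalerA; apply: spanZ.
have [c hc'] := hR II.
have hl0 : linOn (span_sm s') (fun _ : N => (0 : RQ c)) by move=> *; rewrite scaler0 addr0.
have ht0 : forall r, span_sm s' (r *: y) -> (0 : RQ c) = r *: piR c 1.
  by move=> r hr; rewrite piR1; apply/esym/piR0/hc'.
have [g [gl0 gP]] := ext_lin hl0 ht0.
have gl : lin g by apply: linOn_lin; apply: linOn_sub gl0 => x _; exact: sp.
have gE r z' : span s' z' -> g (r *: y + z') = piR c r by move=> h; rewrite gP // add0r piR1.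
have gs : surj g by move=> q; have [x ->] := piR_surj q; exists (x *: y + 0); rewrite gE //; exact: span0.
have gk : forall z, g z = 0 <-> span_sm s' z.
  move=> z; have [r [z' [hz' ->]]] := sp z; rewrite gE // piR0 -hc' /I /=.
  split=> h; first by apply: spanD.
  by have := spanD h (spanZ (-1) hz'); rewrite scaleN1r addrK.
have fN : fin_gen N by apply/fg_span; exists (y :: s').
have hses := ses_ker hR gl gs gk fN (fg_RQ c).
apply: (thick_ext tC hses); last by apply: hc; apply: hq gl gs phi.
have phiN' : Phi (subT (span_sm s')) by apply: hi phi; [exact: sval_lin|exact: sval_inj].
apply: (IH _ (map (lift (span_sm s')) s')); [by rewrite size_map| |exact: phiN'].
move=> x; apply: (span_map_inj (f := fun x : subT (span_sm s') => sval x)); [exact: sval_lin|exact: sval_inj|].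
have -> : map (fun x : subT (span_sm s') => sval x) (map (lift (span_sm s')) s') = s'.
  rewrite -map_comp -[RHS]map_id; apply/eq_in_map => u us /=.
  by apply: liftK; apply: span_mem.
by case: x.
Qed.

Lemma gen_all C (Phi : subcat R) : thick C ->
  (forall N M (i : N -> M), lin i -> injective i -> Phi M -> Phi N) ->
  (forall M N (q : M -> N), lin q -> surj q -> Phi M -> Phi N) ->
  (forall c, Phi (RQ c) -> C (RQ c)) ->
  forall N, fin_gen N -> Phi N -> C N.
Proof.
move=> tC hi hq hc N /fg_span [s hs]; exact: (gen_ind tC hi hq hc (erefl (size s)) hs).
Qed.

End F.

Section G.
Variable R : idomainType.
Implicit Types M N T Q K : lmodType R.
Hypothesis hR : is_PID R.
Implicit Type C : subcat R.
Implicit Types c : R.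

Definition nontors M (x : M) := forall r : R, r *: x = 0 -> r = 0.

Lemma span_ideal M (N : submod M) (y : M) : is_ideal (fun r : R => N (r *: y)).
Proof.
split; first by rewrite scale0r; apply: sm0.
split=> [a b ha hb|r a ha]; first by rewrite scalerDl; apply: smD.
by rewrite -scalerA; apply: smZ.
Qed.

Lemma functional M (s : seq M) : (exists x, span s x /\ nontors x) ->
  exists phi : M -> R^o, linOn (span s) phi /\ exists x, span s x /\ phi x != 0.
Proof.
elim: s => [|y s IH] [x [hx nx]].
  by move: hx => /= hx; subst x; have := nx 1 (scaler0 _ _) => /eqP; rewrite oner_eq0.
case: (lem (exists x, span s x /\ nontors x)) => [ex|nex].
  have [phi [pl [x0 [hx0 px0]]]] := IH ex.
  have [d hd] := hR (span_ideal (span_sm s) y).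
  case: (eqVneq d 0) => [d0|d0].
    have ht : forall r, span_sm s (r *: y) -> phi (r *: y) = r *: (0 : R^o).
      move=> r /hd; rewrite d0 => -[k]; rewrite mulr0 => ->; rewrite scale0r scaler0.
      exact: (linOn0 (P := span_sm s) pl).
    have [h [hl hP]] := ext_lin (N := span_sm s) pl ht.
    exists h; split; first exact: hl.
    exists x0; split; first exact: span_cons.
    by have := hP 0 x0 hx0; rewrite scale0r add0r scaler0 addr0 => ->.
  have dz : forall z, span (y :: s) z -> span s (d *: z).
    move=> z [r [z' [hz' ->]]]; rewrite scalerDr scalerA; apply: spanD; last exact: spanZ.
    by apply/hd; apply: dvd_mul_r.
  exists (fun z => phi (d *: z)); split.
    move=> a x1 x2 h1 h2; rewrite scalerDr scalerA mulrC -scalerA.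
    by apply: pl; apply: dz.
  exists x0; split; first exact: span_cons.
  by rewrite (linOnZ (P := span_sm s)) // mulf_neq0.
have tor : forall z, span s z -> exists r : R, r != 0 /\ r *: z = 0.
  move=> z hz; case: (lem (exists r : R, r != 0 /\ r *: z = 0)) => // nz.
  exfalso; apply: nex; exists z; split=> // r hr; case: (eqVneq r 0) => // r0.
  by exfalso; apply: nz; exists r.
have [A [A0 hA]] := torsion_span (s := s) (fun z hz => tor z (span_mem hz)).
have ny : nontors y.
  move=> r hr; case: (eqVneq r 0) => // r0; exfalso.
  move: hx => [a [z [hz ex]]].
  have : (r * A) *: x = 0.
    have e : r * A * a = A * a * r by ring.
    rewrite ex scalerDr scalerA e -scalerA hr scaler0 add0r.
    by rewrite -scalerA hA ?scaler0.
  by move/nx/eqP; rewrite mulf_eq0 (negbTE r0) (negbTE A0).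
have hl0 : linOn (span_sm s) (fun _ : M => (0 : R^o)) by move=> *; rewrite scaler0 addr0.
have ht : forall r, span_sm s (r *: y) -> (0 : R^o) = r *: (1 : R^o).
  move=> r hr; have : (A * r) *: y = 0 by rewrite -scalerA hA.
  move/ny/eqP; rewrite mulf_eq0 (negbTE A0) /= => /eqP ->; by rewrite scale0r.
have [h [hl hP]] := ext_lin (N := span_sm s) hl0 ht.
exists h; split; first exact: hl.
exists y; split; first exact: span_head.
have := hP 1 0 (span0 s); rewrite scale1r addr0 add0r => ->.
by rewrite ?add0r ?scale1r oner_eq0.
Qed.

Lemma free_summand C M : thick C -> C M -> ~ torsion M -> C (R^o).
Proof.
move=> tC cM nt.
have [s hs] := (fg_span M).1 (thick_fg tC cM).
have [m nm] : exists m : M, nontors m.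
  case: (lem (exists m : M, nontors m)) => // nn; exfalso; apply: nt => m.
  case: (lem (exists r : R, r != 0 /\ r *: m = 0)) => // nr; exfalso; apply: nn.
  exists m => r hr; case: (eqVneq r 0) => // r0; exfalso; apply: nr; by exists r.
have [phi0 [pl0 [x1 [_ px1]]]] := functional (ex_intro _ m (conj (hs m) nm)).
have pl : lin phi0 by apply: linOn_lin; apply: linOn_sub pl0 => x _; exact: hs.
pose I (z : R) := exists x, z = phi0 x.
have II : is_ideal I.
  split; first by exists 0; rewrite lin0.
  split=> [a b [x ->] [y ->]|r a [x ->]]; first by exists (x + y); rewrite linD.
  by exists (r *: x); rewrite linZ.
have [c hc] := hR II.
have c0 : c != 0.
  apply: contraNneq px1 => e; have : dvd c (phi0 x1) by apply/hc; exists x1.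
  by rewrite e => -[k ->]; rewrite mulr0.
have [phi hphi] := @choice M R^o (fun x t => phi0 x = t * c) (fun x => (hc (phi0 x)).1 (ex_intro _ x erefl)).
have phil : lin phi.
  move=> a x y; apply: (mulIf c0); rewrite -hphi pl !hphi.
  by rewrite mulrDl; congr (_ + _); exact: mulrA.
have [x0 ex0] : I c by apply/hc; apply: dvd_refl.
have hs' : forall t : R^o, phi (t *: x0) = t.
  by move=> t; apply: (mulIf c0); rewrite -hphi linZ // -ex0.
have sl : lin (fun t : R^o => t *: x0) by move=> a u v; rewrite scalerDl scalerA.
have := split_iso phil sl hs'.
move/(thick_iso tC)/(_ cM); exact: thick_summand tC.
Qed.

Lemma big_case C : thick C -> C (R^o) -> forall N, fin_gen N -> C N.
Proof.
move=> tC cR N fN; apply: (gen_all hR (Phi := fun _ => True) tC) => // c _.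
case: (eqVneq c 0) => [->|c0]; first exact: (thick_iso tC (@RQ0_iso R) cR).
exact: (thick_cok tC (ses_mulc c0) cR cR).
Qed.

Definition SC C (P : R -> Prop) := is_maximal_ideal P /\ exists p, (forall x, P x <-> dvd p x) /\ C (RQ p).

Lemma RQ_wf C : thick C -> forall c, c != 0 -> S_torsion (SC C) (RQ c) -> C (RQ c).
Proof.
move=> tC; elim/(well_founded_ind (wf_lt_div hR)) => c IH c0 hst.
case: (lem (c \is a GRing.unit)) => [cu|ncu]; first by apply: thick_zero tC _; apply: RQ_zero.
case: (lem (exists d e, c = d * e /\ ~ d \is a GRing.unit /\ ~ e \is a GRing.unit)) => [[d [e [cde [du eu]]]]|nred].
  have d0 : d != 0 by apply: contra_neq c0 => e1; rewrite cde e1 mul0r.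
  have e0 : e != 0 by apply: contra_neq c0 => e1; rewrite cde e1 mulr0.
  pose psif := fun x : R^o => piR c (x * e).
  have psifl : lin psif by move=> a x y; rewrite /psif mulrDl -mulrA piRD piRZ.
  have psifk : forall x : R, dvd d x -> psif x = 0.
    by move=> x [k ->]; apply/piR0; rewrite cde; exists k; rewrite mulrA.
  pose f := liftR d psif.
  have fl : lin f := liftR_lin psifl psifk.
  have gk0 : forall x : R, dvd c x -> piR e x = 0.
    by move=> x [k ->]; apply/piR0; rewrite cde; exists (k * d); rewrite mulrA.
  pose g := liftR c (piR e).
  have gl : lin g := liftR_lin (piR_lin e) gk0.
  have hses : ses f g.
    split; first exact: fg_RQ.
    split; first exact: fg_RQ.
    split; first exact: fg_RQ.
    split=> //; split=> //.
    split.
      move=> q q'; have [x ->] := piR_surj q; have [y ->] := piR_surj q'.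
      rewrite /f !liftRE // /psif => /piR_eq; rewrite -mulrBl cde => h.
      by apply/piR_eq; apply: (dvd_cancel e0).
    split; first by move=> q; have [x ->] := piR_surj q; exists (piR c x); rewrite /g liftRE //; exact: piR_lin.
    move=> q; have [y ->] := piR_surj q; rewrite /g liftRE //; last exact: piR_lin.
    split=> [/piR0 [k ->]|[z ez]].
      by exists (piR d k); rewrite /f liftRE.
    have [x ex] := piR_surj z; move: ez; rewrite ex /f liftRE // /psif => /piR_eq h.
    apply/piR0; have -> : y = (y - x * e) + x * e by rewrite subrK.
    apply: dvdD; last exact: dvd_mul_l.
    by apply: dvd_trans h; rewrite cde; apply: dvd_mul_l.
  have fi : injective f by case: hses => _ [_ [_ [_ [_ [h _]]]]].
  have gs : surj g by case: hses => _ [_ [_ [_ [_ [_ [h _]]]]]].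
  apply: (thick_ext tC hses).
    apply: IH => //; last exact: (st_inj hR fl fi hst).
    split=> //; split; first by rewrite cde; apply: dvd_mul_r.
    move=> [k ek]; apply: eu; apply/dvd1U; exists k; apply: (mulIf d0).
    by rewrite mul1r {1}ek cde; ring.
  apply: IH => //; last exact: (st_surj hR gl gs hst).
  split=> //; split; first by rewrite cde; apply: dvd_mul_l.
  move=> [k ek]; apply: du; apply/dvd1U; exists k; apply: (mulIf e0).
  by rewrite mul1r {1}ek cde; ring.
have ir : irred c.
  split=> //; split=> // d e cde; case: (lem (d \is a GRing.unit)) => [|du]; first by left.
  case: (lem (e \is a GRing.unit)) => [|eu]; first by right.
  by exfalso; apply: nred; exists d, e.
have pc := irred_prime hR ir.
have [P [[_ [p [hp Cp]]] hPc]] : in_S (SC C) c.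
  case: (lem (in_S (SC C) c)) => // nin; exfalso; apply: ncu; apply/dvd1U.
  have [_ [_ hpart]] := hst.
  have := hpart c pc nin (piR c 1) (ex_intro _ 1%N _).
  rewrite expr1 piR1 => /(_ (proj2 (piR0 c c) (dvd_refl c))) /piR0 //.
apply: thick_iso tC _ Cp; apply: RQ_iso => x; rewrite -hp; exact: hPc.
Qed.

Lemma torsion_in C : thick C -> forall N, S_torsion (SC C) N -> C N.
Proof.
move=> tC N hN; apply: (gen_all hR (Phi := S_torsion (SC C)) tC _ _ _ (proj1 hN) hN).
- by move=> N' M i il ii; apply: st_inj.
- by move=> M N' q ql qs; apply: st_surj.
move=> c hc; apply: RQ_wf => //.
apply/eqP => c0; have [_ [ht _]] := hc.
have [r [r0 hr]] := ht (piR c 1); move: hr; rewrite piR1 => /piR0; rewrite c0 => -[k].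
by rewrite mulr0 => e; move: r0; rewrite e eqxx.
Qed.

End G.

Section H.
Variable R : idomainType.
Implicit Types M N T Q K Y : lmodType R.
Hypothesis hR : is_PID R.
Implicit Type C : subcat R.
Implicit Types c : R.

Lemma sestrick C p i : thick C -> is_prime_elt p -> C (RQ (p ^+ i.+1)) -> C (RQ p).
Proof.
move=> tC pp cq.
have [p0 _] := pp.
set q1 := p ^+ i.+1; set a := p ^+ i; set q2 := a * q1.
have a0 : a != 0 by rewrite expf_neq0.
have q1E : q1 = a * p by rewrite /q1 exprSr.
pose psif := fun x : R^o => (piR p x, piR q2 (a * x)).
have psifl : lin psif.
  move=> b x y; rewrite /psif pairE; congr pair; first exact: piR_lin.
  by rewrite -piRZ -piRD; congr piR; rewrite /GRing.scale /=; ring.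
have psifk : forall x : R, dvd q1 x -> psif x = 0.
  move=> x [k ->]; rewrite /psif; congr pair; apply/piR0.
    by rewrite q1E mulrA; apply: dvd_mul_l.
  by exists k; rewrite /q2; ring.
pose f := liftR q1 psif.
have fl : lin f := liftR_lin psifl psifk.
pose psi1 := fun w : R^o => piR q1 (- (a * w)).
have psi1l : lin psi1.
  move=> b x y; rewrite /psi1 -piRZ -piRD; congr piR; rewrite /GRing.scale /=; ring.
have psi1k : forall x : R, dvd p x -> psi1 x = 0.
  by move=> x [k ->]; apply/piR0; rewrite q1E; exists (- k); ring.
pose g1 := liftR p psi1.
have g1l : lin g1 := liftR_lin psi1l psi1k.
have psi2k : forall x : R, dvd q2 x -> piR q1 x = 0.
  by move=> x h; apply/piR0; apply: dvd_trans h; apply: dvd_mul_l.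
pose g2 := liftR q2 (piR q1).
have g2l : lin g2 := liftR_lin (piR_lin q1) psi2k.
pose g := fun z : (RQ p * RQ q2)%type => g1 z.1 + g2 z.2.
have gl : lin g.
  move=> b [z1 z2] [z1' z2']; rewrite /g pairE /= g1l g2l.
  by rewrite scalerDr addrACA.
have gE : forall u y : R, g (piR p u, piR q2 y) = piR q1 (y - a * u).
  move=> u y; rewrite /g /= /g1 /g2 !liftRE //; last exact: piR_lin.
  by rewrite /psi1 addrC -piRD.
have hses : ses f g.
  split; first exact: fg_RQ.
  split; first by apply: fg_prod; exact: fg_RQ.
  split; first exact: fg_RQ.
  split=> //; split=> //.
  split.
    move=> q q'; have [x ->] := piR_surj q; have [y ->] := piR_surj q'.
    rewrite /f !liftRE // /psif => e; have := congr1 snd e => /= /piR_eq h.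
    by apply/piR_eq; apply: (dvd_cancel_l a0); rewrite mulrBr.
  split.
    move=> z; have [y ->] := piR_surj z; exists (piR p 0, piR q2 y).
    by rewrite gE mulr0 subr0.
  move=> [z1 z2]; have [u ->] := piR_surj z1; have [y ->] := piR_surj z2.
  rewrite gE; split.
    move=> /piR0 [t et]; exists (piR q1 (u + t * p)); rewrite /f liftRE // /psif.
    congr pair.
      by apply/piR_eq; exists (- t); ring.
    congr piR; rewrite mulrDr mulrCA -q1E -et; ring.
  move=> [w]; have [x ->] := piR_surj w; rewrite /f liftRE // /psif => e.
  have /piR_eq [k1 e1] := congr1 fst e.
  have /piR_eq h2 := congr1 snd e.
  apply/piR0; rewrite (_ : y - a * u = (y - a * x) - (a * (u - x))); last by ring.
  rewrite e1; apply: dvdB; first by apply: dvd_trans h2; apply: dvd_mul_l.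
  by exists k1; rewrite q1E; ring.
have := thick_ext tC hses cq cq.
exact: thick_summand.
Qed.

Lemma inj_ext Y (w : seq Y) (q : R) (y : Y) : (forall x, span w x) -> q != 0 ->
  (forall z : Y, q *: z = 0) -> (forall r, r *: y = 0 -> dvd q r) ->
  exists h : Y -> RQ q, lin h /\ h y = piR q 1.
Proof.
move=> hw q0 qk ann.
suff: forall w', exists h : Y -> RQ q, linOn (span (y :: w')) h /\ h y = piR q 1.
  move/(_ w) => [h [hl hy]]; exists h; split=> //; apply: linOn_lin; apply: linOn_sub hl => x _.
  by apply: span_cons; exact: hw.
elim=> [|w0 w' IH].
  have hl0 : linOn (span_sm (Nil Y)) (fun _ => (0 : RQ q)) by move=> *; rewrite scaler0 addr0.
  have ht : forall r, span_sm (Nil Y) (r *: y) -> (0 : RQ q) = r *: piR q 1.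
    by move=> r hr; rewrite piR1; apply/esym/piR0/ann.
  have [h [hl hP]] := ext_lin (N := span_sm (Nil Y)) hl0 ht.
  exists h; split; first exact: hl.
  by have := hP 1 0 erefl; rewrite scale1r addr0 add0r scale1r.
have [h [hl hy]] := IH.
pose N := span_sm (y :: w').
have [d hd] := hR (span_ideal N w0).
have [e qe] : dvd d q by apply/hd; rewrite qk; apply: span0.
have e0 : e != 0 by apply: contra_neq q0 => e1; rewrite qe e1 mul0r.
have hdN : N (d *: w0) by apply/hd; apply: dvd_refl.
have [u0 hu0] := piR_surj (h (d *: w0)).
have key : e *: h (d *: w0) = 0.
  by rewrite -(linOnZ (P := N)) // scalerA -qe qk (linOn0 (P := N) hl).
have [t0 ht0] : dvd d u0.
  move: key; rewrite hu0 -piRZ => /piR0; rewrite qe; exact: dvd_cancel_l.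
have ht : forall r, N (r *: w0) -> h (r *: w0) = r *: piR q t0.
  move=> r /hd [k ->]; rewrite -[(k * d) *: w0]scalerA (linOnZ (P := N)) // hu0 ht0 -!piRZ.
  by congr piR; ring.
have [h' [hl' hP']] := ext_lin (N := N) hl ht.
exists h'; split.
  by apply: linOn_sub hl' => x hx; apply: span_swap; exact: hx.
have := hP' 0 y (span_head y w'); rewrite !scale0r add0r addr0 hy; exact.
Qed.

Lemma nat_min (P : nat -> Prop) k : P k -> ~ P 0%N -> exists j, P j.+1 /\ ~ P j.
Proof.
elim: k => [//|k IH] hk n0; case: (lem (P k)) => [hk'|nk]; [exact: IH|by exists k].
Qed.

Lemma coprime_kill M (z : M) x y : coprime x y -> x *: z = 0 -> y *: z = 0 -> z = 0.
Proof.
move=> [u [v e]] hx hy.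
by rewrite -[z]scale1r -e scalerDl -!scalerA hx hy !scaler0 addr0.
Qed.

Lemma ann_pow p j Y (y0 : Y) : is_prime_elt p -> p ^+ j *: y0 != 0 -> p ^+ j.+1 *: y0 = 0 ->
  forall r, r *: y0 = 0 -> dvd (p ^+ j.+1) r.
Proof.
move=> pp nz hk r hr.
have [g [u [v [gr [gq eg]]]]] := gcd_ex hR r (p ^+ j.+1).
have gy : g *: y0 = 0 by rewrite eg scalerDl -!scalerA hr hk !scaler0 addr0.
case: (div_pow hR pp gq) => [h|[k ek]]; first exact: dvd_trans h gr.
by move: nz; rewrite ek -scalerA gy scaler0 eqxx.
Qed.

Lemma all_torsion C M : thick C -> ~ C (R^o) -> C M -> torsion M.
Proof.
move=> tC nR cM; case: (lem (torsion M)) => // nt; exfalso; apply: nR.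
exact: (free_summand hR tC cM nt).
Qed.

Lemma torsion_out C : thick C -> ~ C (R^o) -> forall M, C M -> S_torsion (SC C) M.
Proof.
move=> tC nR M cM.
have fM := thick_fg tC cM.
have tM := all_torsion tC nR cM.
split=> //; split=> // p pp nin m [n hn].
case: (lem (m = 0)) => // m0; exfalso; apply: nin.
have [A [A0 hA]] := fg_torsion_ann fM tM.
have [p0 [pu _]] := pp.
have [k [s0 [eA ns]]] := val_dec hR pu p0 A0.
have cp1 := prime_coprime hR pp ns.
have [a [b eab]] : coprime (p ^+ k) s0 := coprime_pow k cp1.
have cpn : coprime (p ^+ n) s0 := coprime_pow n cp1.
have h1 : (a * p ^+ k) *: m = 0.
  apply: (coprime_kill cpn).
    by rewrite scalerA mulrC -scalerA hn scaler0.
  rewrite scalerA (_ : s0 * (a * p ^+ k) = a * A); last by rewrite eA; ring.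
  by rewrite -scalerA hA scaler0.
have kb : forall x : M, p ^+ k *: ((b * s0) *: x) = 0.
  move=> x; rewrite scalerA (_ : p ^+ k * (b * s0) = b * A); first by rewrite -scalerA hA scaler0.
  by rewrite eA; ring.
have mb : m = (b * s0) *: m by rewrite -{1}[m]scale1r -eab scalerDl h1 add0r.
have mk : p ^+ k *: m = 0 by rewrite mb kb.
pose KS := kill_sm M (p ^+ k).
pose h := fun x : M => (exist _ ((b * s0) *: x) (kb x) : subT KS).
have hl : lin h.
  move=> r x y; apply: subT_inj => /=.
  by rewrite scalerDr !scalerA mulrC.
have hs : forall z : subT KS, h (sval z) = z.
  move=> z; apply: subT_inj => /=.
  have e1 : p ^+ k *: sval z = 0 := svalP z.
  have e0 : (a * p ^+ k) *: sval z = 0 by rewrite -scalerA e1 scaler0.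
  by rewrite -{2}[sval z]scale1r -eab scalerDl e0 add0r.
have CY : C (subT KS).
  have := split_iso hl (@sval_lin _ _ KS) hs.
  by move/(thick_iso tC)/(_ cM)/(thick_summand tC).
pose ym := (exist _ m mk : subT KS).
pose P j := forall z : subT KS, p ^+ j *: z = 0.
have Pk : P k by move=> z; apply: subT_inj => /=; exact: (svalP z).
have nP0 : ~ P 0%N.
  move=> h0; apply: m0; have := congr1 sval (h0 ym); rewrite /= expr0 scale1r //.
have [j [Pj nPj]] := nat_min Pk nP0.
have [y0 hy0] : exists y0 : subT KS, p ^+ j *: y0 != 0.
  case: (lem (exists y0 : subT KS, p ^+ j *: y0 != 0)) => // nex; exfalso; apply: nPj => z.
  by case: (lem (p ^+ j *: z = 0)) => // nz; exfalso; apply: nex; exists z; apply/eqP.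
have ann := ann_pow pp hy0 (Pj y0).
have [w hw] := (fg_span _).1 (thick_fg tC CY).
have q0 : p ^+ j.+1 != 0 by rewrite expf_neq0.
have [hY [hYl hYy]] := inj_ext hw q0 Pj ann.
pose sY := liftR (p ^+ j.+1) (fun r : R^o => (r : R) *: y0).
have sYl0 : lin (fun r : R^o => (r : R) *: y0) by move=> r u v; rewrite scalerDl scalerA.
have sYk : forall x : R, dvd (p ^+ j.+1) x -> x *: y0 = 0.
  by move=> x [l ->]; rewrite -scalerA Pj scaler0.
have sYl : lin sY := liftR_lin sYl0 sYk.
have hsY : forall t, hY (sY t) = t.
  move=> t; have [x ->] := piR_surj t; rewrite /sY liftRE // linZ // hYy.
  by rewrite piR1.
have CQ : C (RQ (p ^+ j.+1)).
  have := split_iso hYl sYl hsY.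
  by move/(thick_iso tC)/(_ CY)/(thick_summand tC).
have CP := sestrick tC pp CQ.
exists (dvd p); split; last by move=> x.
split; first exact: (prime_maximal hR pp).
by exists p; split.
Qed.

Lemma thick_char C : thick C ->
  (C (R^o) /\ forall N, C N <-> fin_gen N) \/ (~ C (R^o) /\ forall N, C N <-> S_torsion (SC C) N).
Proof.
move=> tC; case: (lem (C (R^o))) => [cR|nR]; [left|right]; split=> // N; split.
- exact: (thick_fg tC).
- exact: (big_case hR tC cR).
- exact: (torsion_out tC nR).
- exact: (torsion_in hR tC).
Qed.

End H.

Section Main.
Variable R : idomainType.
Hypothesis hR : is_PID R.
Implicit Type C : subcat R.

Lemma thick_serre C : thick C -> serre C.
Proof.
move=> tC; case: (thick_char hR tC) => [[_ h]|[_ h]].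
  have -> : C = @fgA R by apply/predeqP => M; rewrite h.
  exact: (serre_fgA hR).
have -> : C = S_torsion (SC C) by apply/predeqP => M; rewrite h.
exact: (serre_st hR (SC C)).
Qed.

Lemma inSC C p : thick C -> is_prime_elt p -> (in_S (SC C) p <-> C (RQ p)).
Proof.
move=> tC pp; split.
  move=> [P [[_ [p' [hp' Cp']]] hP]]; apply: (thick_iso tC _ Cp'); apply: RQ_iso => x.
  by rewrite -hp' hP.
move=> Cp; exists (dvd p); split; last by move=> x.
split; first exact: (prime_maximal hR pp).
by exists p; split.
Qed.

Lemma st_RQ (S : (R -> Prop) -> Prop) p : is_prime_elt p -> (S_torsion S (RQ p) <-> in_S S p).
Proof.
move=> pp; have [p0 [pu pr]] := pp; split.
  move=> [_ [_ hpart]]; case: (lem (in_S S p)) => // nin; exfalso; apply: pu; apply/dvd1U.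
  have := hpart p pp nin (piR p 1) (ex_intro _ 1%N _).
  rewrite expr1 piR1 => /(_ (proj2 (piR0 p p) (dvd_refl p))) /piR0 //.
move=> [P [SP hP]]; split; first exact: fg_RQ.
have kp : forall q : RQ p, p *: q = 0.
  by move=> q; have [x ->] := piR_surj q; rewrite -piRZ; apply/piR0; apply: dvd_mul_r.
split; first by move=> q; exists p; split=> //; apply: kp.
move=> q' qp nin m [n hn].
have npq : ~ dvd p (q' ^+ n).
  move=> /(prime_dvd_pow pp) [k ek]; have [q0 [qu qr]] := qp.
  case: (qr k p); first by rewrite -ek; apply: dvd_refl.
    move=> [l el]; apply: pu; apply/dvd1U; exists l; apply: (mulIf q0).
    by rewrite mul1r {1}ek el; ring.
  move=> qdp; apply: nin; exists P; split=> // x; rewrite hP; split=> h.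
    exact: dvd_trans qdp h.
  by apply: dvd_trans h; exists k.
exact: (coprime_kill (prime_coprime hR pp npq) (kp m) hn).
Qed.

Definition Fspec C := fun P : R -> Prop => is_prime_ideal P /\
  (C (R^o) \/ exists p, is_prime_elt p /\ (forall x, P x <-> dvd p x) /\ C (RQ p)).

Definition P0 := fun x : R => x = 0.

Lemma F_P0 C : Fspec C P0 <-> C (R^o).
Proof.
split; last by move=> h; split; [exact: zero_prime|left].
move=> [_ [//|[p [[p0 _] [hp _]]]]].
by exfalso; move: p0; have := (hp p).2 (dvd_refl p); rewrite /P0 => ->; rewrite eqxx.
Qed.

Lemma F_p C p : thick C -> ~ C (R^o) -> is_prime_elt p -> (Fspec C (dvd p) <-> C (RQ p)).
Proof.
move=> tC nR pp; split.
  move=> [_ [//|[p' [_ [hp Cp']]]]]; apply: (thick_iso tC _ Cp'); apply: RQ_iso => x.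
  by rewrite hp.
move=> Cp; split; first exact: prime_elt_ideal.
by right; exists p; split=> //; split.
Qed.

Lemma st_ext (S S' : (R -> Prop) -> Prop) M : (forall p, is_prime_elt p -> in_S S' p -> in_S S p) ->
  S_torsion S' M -> S_torsion S M.
Proof.
move=> h [f [t pt]]; split=> //; split=> // p pp nin; apply: pt => // ins'.
exact: nin (h p pp ins').
Qed.

Lemma pred_ext (P Q : R -> Prop) : (forall x, P x <-> Q x) -> P = Q.
Proof. by move=> h; apply/predeqP. Qed.

Theorem main_thm :
  (forall C : subcat R,
     (thick C <-> wide C) /\ (wide C <-> serre C) /\
     (thick C <->
        (same_subcat C (@fgA R) \/
         exists S : (R -> Prop) -> Prop,
           (forall P, S P -> is_maximal_ideal P) /\ same_subcat C (S_torsion S)))) /\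
  (exists F : subcat R -> ((R -> Prop) -> Prop),
     (forall C D, thick C -> thick D -> same_subcat C D -> same_specset (F C) (F D)) /\
     (forall C, thick C -> spec_closed (F C)) /\
     (forall C D, thick C -> thick D -> same_specset (F C) (F D) -> same_subcat C D) /\
     (forall T, spec_closed T -> exists C, thick C /\ same_specset (F C) T)).
Proof.
split.
  move=> C; split.
    split; first by move=> /thick_serre [].
    exact: wide_thick.
  split.
    split; last by case.
    by move=> /wide_thick /thick_serre.
  split.
    move=> tC; case: (thick_char hR tC) => [[_ h]|[_ h]]; first by left.
    right; exists (SC C); split=> //; by move=> P [].
  move=> [h|[S [_ h]]].
    have -> : C = @fgA R by apply/predeqP => M; rewrite h.
    exact: wide_thick (proj1 (serre_fgA hR)).
  have -> : C = S_torsion S by apply/predeqP => M; rewrite h.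
  exact: wide_thick (proj1 (serre_st hR S)).
exists Fspec; split.
  move=> C D _ _ h; have -> : C = D by apply/predeqP.
  by move=> P _.
split.
  move=> C tC; split; first by move=> P [].
  move=> P [pP [cR|[p [pp [hp Cp]]]]].
    exists P0; split; first exact: ideal_zero.
    split; first by split=> // x; rewrite /P0 => ->; case: pP => [[h _] _].
    by move=> Q [pQ _]; split=> //; left.
  exists (dvd p); split; first exact: ideal_dvd.
  split; first by split=> // x /hp.
  move=> Q [pQ sQ]; split=> //; right; exists p; split=> //; split=> //.
  have [_ [_ mx]] := prime_maximal hR pp.
  case: (mx Q (proj1 pQ) sQ) => [h|q1]; last by case: pQ => _ [].
  by move=> x; split; [apply: h|apply: sQ].
split.
  move=> C D tC tD hF.
  have eR : C (R^o) <-> D (R^o) by rewrite -!F_P0; apply: hF; exact: zero_prime.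
  case: (thick_char hR tC) => [[cR hC]|[nC hC]]; case: (thick_char hR tD) => [[dR hD]|[nD hD]].
  - by move=> M; rewrite hC hD.
  - by exfalso; apply: nD; apply/eR.
  - by exfalso; apply: nC; apply/eR.
  have key : forall p, is_prime_elt p -> (in_S (SC C) p <-> in_S (SC D) p).
    move=> p pp; rewrite (inSC tC pp) (inSC tD pp) -(F_p tC nC pp) -(F_p tD nD pp).
    by apply: hF; exact: prime_elt_ideal.
  move=> M; rewrite hC hD; split.
    by apply: st_ext => p pp h; exact: (key p pp).1 h.
  by apply: st_ext => p pp h; exact: (key p pp).2 h.
move=> T [Tp Tc].
case: (lem (T P0)) => [t0|nt0].
  exists (@fgA R); split; first exact: wide_thick (proj1 (serre_fgA hR)).
  move=> P pP; split=> _.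
    have [I [hI [[_ IP0] hQ]]] := Tc P0 t0; apply: hQ; split=> // x /IP0 ->.
    by case: pP => [[h _] _].
  by split=> //; left; exact: fg_R.
exists (S_torsion T); split; first exact: wide_thick (proj1 (serre_st hR T)).
have nR : ~ S_torsion T (R^o).
  move=> [_ [t _]]; have [r [r0 hr]] := t 1.
  have e : r = 0 by rewrite -[r]mulr1; exact: hr.
  by rewrite e eqxx in r0.
move=> P pP; split.
  move=> [_ [//|[p [pp [hp Cp]]]]].
  have [P' [TP' hP']] := (st_RQ T pp).1 Cp.
  by have -> : P = P' by apply: pred_ext => x; rewrite hp hP'.
move=> TP; split=> //; right.
case: (prime_ideal_char hR pP) => [hz|[p [pp hp]]].
  exfalso; apply: nt0; have <- : P = P0 by apply: pred_ext => x; rewrite hz.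
  done.
exists p; split=> //; split=> //; apply/(st_RQ T pp); exists P; split=> //.
Qed.



End Main.

Theorem mainTheorem4 (R : idomainType) (hR : is_PID R) :
  (forall C : subcat R,
     (thick C <-> wide C) /\ (wide C <-> serre C) /\
     (thick C <->
        (same_subcat C (@fgA R) \/
         exists S : (R -> Prop) -> Prop,
           (forall P, S P -> is_maximal_ideal P) /\ same_subcat C (S_torsion S)))) /\
  (exists F : subcat R -> ((R -> Prop) -> Prop),
     (forall C D, thick C -> thick D -> same_subcat C D -> same_specset (F C) (F D)) /\
     (forall C, thick C -> spec_closed (F C)) /\
     (forall C D, thick C -> thick D -> same_specset (F C) (F D) -> same_subcat C D) /\
     (forall T, spec_closed T -> exists C, thick C /\ same_specset (F C) T)).
Proof. exact: (main_thm hR). Qed.
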